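(* Let the spot price $\pi$ have CDF $F_{\pi}$ and monotonically decreasing density $f_{\pi}$ on $[\underline{\pi},\bar{\pi}]$ with $0\le\underline{\pi}<\bar{\pi}$, and let $t_k,t_e,t_s>0$ with $t_s>t_e$. Consider the problem (P1): minimize over $(q,p)$ $$\Phi_1(p,q)=q\,t_e\bar{\pi}+\frac{(1-q)t_e\int_{\underline{\pi}}^{p}x f_{\pi}(x)\,dx}{F_{\pi}(p)}$$ subject to $(1-q)t_e\le \frac{t_k}{1-F_{\pi}(p)}$, $\; t_k\left(\frac{1}{F_{\pi}(p)}-1\right)+(1-q)t_e\le t_s$, $\; q t_e\le t_s$, $\;\underline{\pi}\le p\le\bar{\pi}$, $\;0\le q\le 1$. Then the optimal bid price is $p^*=F_{\pi}^{-1}\!\left(1-\frac{t_k}{t_e}\right)$ and the optimal fraction of the job run on the on-demand instance is $q^*=0$.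
   Context: Model: a user runs a fraction $q$ of a job (execution time $t_e$, deadline $t_s$) on an on-demand instance at price $\bar{\pi}$ and the rest on a spot instance via a one-time request with bid $p$; spot prices in slots of length $t_k$ are i.i.d. with CDF $F_{\pi}$ and monotonically decreasing density $f_{\pi}$ on $[\underline{\pi},\bar{\pi}]$.
   Formalization: Two hypotheses join tₛ > tₑ: tₖ < tₑ, and tₖ(1/(1 − tₖ/tₑ) − 1) + tₑ ≤ tₛ, the deadline constraint of (P1) at p* with q = 0. The statement above fails without it. *)

(* Defs.v *)
From Stdlib Require Import Reals.
From Coquelicot Require Import Coquelicot.
Open Scope R_scope.

Definition spot_price_model (lo hi : R) (f F : R -> R) : Prop :=
  0 <= lo < hi /\
  (forall x, lo <= x <= hi -> 0 <= f x) /\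
  (forall x y, lo <= x -> x <= y -> y <= hi -> f y <= f x) /\
  ex_RInt f lo hi /\
  RInt f lo hi = 1 /\
  (forall x, lo <= x <= hi -> F x = RInt f lo x).

Definition Finv (lo hi : R) (F : R -> R) (y : R) : R :=
  real (Glb_Rbar (fun x => lo <= x <= hi /\ y <= F x)).

Definition Phi1 (hi te : R) (f F : R -> R) (lo p q : R) : R :=
  q * te * hi + (1 - q) * te * RInt (fun x => x * f x) lo p / F p.

(* Constraints of (P1).  The terms t_k/(1-F p) and 1/F p are read as +oo
   when the denominator vanishes: the first constraint is then automatically
   satisfied, the second one violated. *)
Definition P1_feasible (lo hi tk te ts : R) (F : R -> R) (p q : R) : Prop :=
  (F p < 1 -> (1 - q) * te <= tk / (1 - F p)) /\
  (0 < F p /\ tk * (1 / F p - 1) + (1 - q) * te <= ts) /\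
  q * te <= ts /\
  lo <= p <= hi /\
  0 <= q <= 1.

Definition P1_optimal (lo hi tk te ts : R) (f F : R -> R) (p q : R) : Prop :=
  P1_feasible lo hi tk te ts F p q /\
  forall p' q', P1_feasible lo hi tk te ts F p' q' ->
    Phi1 hi te f F lo p q <= Phi1 hi te f F lo p' q'.

(* Main.v *)
Require Import Defs.
From Stdlib Require Import Reals Lra Lia Psatz ZArith.
From Coquelicot Require Import Coquelicot.
Open Scope R_scope.

Lemma ex_scal (g : R -> R) (k a b : R) : ex_RInt g a b -> ex_RInt (fun x => k * g x) a b.
Proof. intro H. apply (ex_RInt_scal g a b k H). Qed.

Lemma RInt_scal' (g : R -> R) (k a b : R) : ex_RInt g a b -> RInt (fun x => k * g x) a b = k * RInt g a b.
Proof. intro H. apply (RInt_scal g a b k H). Qed.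

Lemma ex_sub (g : R -> R) lo hi u v : ex_RInt g lo hi -> lo <= u -> u <= v -> v <= hi -> ex_RInt g u v.
Proof.
  intros H h1 h2 h3.
  apply (ex_RInt_Chasles_2 g lo u v); [lra|].
  apply (ex_RInt_Chasles_1 g lo v hi); [lra|exact H].
Qed.

Definition ftil (lo hi : R) (f : R -> R) x :=
  if Rle_dec lo x then if Rle_dec x hi then f x else 0 else 0.

Definition sN (n : nat) (x : R) := IZR (Zfloor (INR (S n) * x)) / INR (S n).

Lemma ex_xf (lo hi : R) (f : R -> R) :
  lo < hi -> (forall x, lo <= x <= hi -> 0 <= f x) ->
  (forall x y, lo <= x -> x <= y -> y <= hi -> f y <= f x) ->
  ex_RInt f lo hi -> ex_RInt (fun x => x * f x) lo hi.
Proof.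
  intros Hlt Hpos Hdec Hint.
  set (ft := ftil lo hi f).
  assert (Hft : forall u v, lo <= u -> u <= v -> v <= hi -> ex_RInt ft u v).
  { intros u v h1 h2 h3. apply (ex_RInt_ext f).
    - intros x hx. rewrite Rmin_left in hx by lra. rewrite Rmax_right in hx by lra.
      unfold ft, ftil. destruct (Rle_dec lo x); [|lra]. destruct (Rle_dec x hi); lra.
    - apply (ex_sub f lo hi); auto. }
  assert (Hbnd : forall x, Rabs (ft x) <= f lo).
  { intro x. unfold ft, ftil. destruct (Rle_dec lo x).
    - destruct (Rle_dec x hi).
      + rewrite Rabs_right. apply Hdec; lra. apply Rle_ge, Hpos; lra.
      + rewrite Rabs_R0. apply Hpos; lra.
    - rewrite Rabs_R0. apply Hpos; lra. }
  assert (Hn : forall n, ex_RInt (fun x => sN n x * ft x) lo hi).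
  { intro n. set (N := INR (S n)).
    assert (HN : 0 < N) by (unfold N; apply lt_0_INR; lia).
    set (z0 := Zfloor (N * lo)).
    assert (Hz0 := Zfloor_bound (N * lo)). fold z0 in Hz0.
    assert (Hk : forall k : nat, forall b, lo <= b <= hi ->
               N * b <= IZR (z0 + 1 + Z.of_nat k) ->
               ex_RInt (fun x => sN n x * ft x) lo b).
    { induction k as [|k IH]; intros b hb hNb.
      - apply (ex_RInt_ext (fun x => (IZR z0 / N) * ft x)).
        + intros x hx. rewrite Rmin_left in hx by lra. rewrite Rmax_right in hx by lra.
          unfold sN. fold N. rewrite (Zfloor_eq z0 (N*x)); [reflexivity|].
          replace (z0 + 1 + Z.of_nat 0)%Z with (z0+1)%Z in hNb by lia.
          rewrite plus_IZR in hNb. change (IZR 1) with 1 in hNb.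
          split; nra.


        + apply ex_scal. apply Hft; lra.
      - destruct (Rle_dec (N * b) (IZR (z0 + 1 + Z.of_nat k))) as [hle|hgt].
        + apply IH; auto.
        + set (c := IZR (z0 + 1 + Z.of_nat k) / N).
          assert (hc1 : N * c = IZR (z0 + 1 + Z.of_nat k)) by (unfold c; field; lra).
          assert (hz : IZR z0 + 1 <= IZR (z0 + 1 + Z.of_nat k)).
          { rewrite <- (plus_IZR z0 1). apply IZR_le. lia. }
          assert (hlc : lo < c) by nra.
          assert (hcb : c < b) by nra.
          apply (ex_RInt_Chasles _ lo c b).
          * apply IH. lra. lra.
          * apply (ex_RInt_ext (fun x => (IZR (z0 + 1 + Z.of_nat k) / N) * ft x)).
            -- intros x hx. rewrite Rmin_left in hx by lra. rewrite Rmax_right in hx by lra.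
               unfold sN. fold N. rewrite (Zfloor_eq (z0 + 1 + Z.of_nat k) (N*x)); [reflexivity|].
               rewrite Nat2Z.inj_succ in hNb.
               replace (z0 + 1 + Z.succ (Z.of_nat k))%Z with ((z0 + 1 + Z.of_nat k) + 1)%Z in hNb by lia.
               rewrite plus_IZR in hNb. change (IZR 1) with 1 in hNb.
               split; nra.
            -- apply ex_scal. apply Hft; lra. }
    set (k := Z.to_nat (Zfloor (N * hi) - z0)).
    apply (Hk k). lra.
    assert (hz : (z0 <= Zfloor (N * hi))%Z) by (apply Zfloor_le; nra).
    unfold k. rewrite Z2Nat.id by lia.
    replace (z0 + 1 + (Zfloor (N * hi) - z0))%Z with (Zfloor (N * hi) + 1)%Z by lia.
    rewrite plus_IZR. pose proof (Zfloor_bound (N * hi)). simpl. lra. }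
  assert (Hg : ex_RInt (fun x => x * ft x) lo hi).
  { destruct (filterlim_RInt (fun n x => sN n x * ft x) lo hi eventually eventually_filter
       (fun x => x * ft x) (fun n => RInt (fun x => sN n x * ft x) lo hi)) as [If [_ HI]].
    - intro n. apply RInt_correct. apply Hn.
    - intros P [eps HP].
      assert (Hl : 0 <= f lo) by (apply Hpos; lra).
      destruct (nfloor_ex ((f lo + 1) / eps)) as [M HM].
      { apply Rlt_le, Rdiv_lt_0_compat. lra. apply cond_pos. }
      exists M. intros n hn. apply HP. intro t.
      change (Rabs (sN n t * ft t - t * ft t) < eps).
      pose proof (cond_pos eps) as he.
      assert (HN : 0 < INR (S n)) by (apply lt_0_INR; lia).
      assert (HMn : INR M <= INR n) by (apply le_INR; lia).
      rewrite S_INR in HN.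
      assert (Hd : Rabs (sN n t - t) <= 1 / (INR n + 1)).
      { unfold sN. rewrite S_INR. pose proof (Zfloor_bound ((INR n + 1) * t)) as Hz.
        set (z := IZR (Zfloor ((INR n + 1) * t))) in *.
        set (K := INR n + 1) in *.
        assert (HK : 0 < / K) by (apply Rinv_0_lt_compat; lra).
        replace (z / K - t) with ((z - K * t) * / K) by (field; lra).
        rewrite Rabs_left1 by nra.
        replace (- ((z - K * t) * / K)) with ((K * t - z) * / K) by ring.
        unfold Rdiv. rewrite Rmult_1_l. nra. }
      replace (sN n t * ft t - t * ft t) with ((sN n t - t) * ft t) by ring.
      rewrite Rabs_mult.
      apply Rle_lt_trans with (1 / (INR n + 1) * f lo).
      + apply Rmult_le_compat; auto using Rabs_pos.
      + assert ((f lo + 1) / eps < INR n + 1) by lra.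
        apply (Rmult_lt_reg_l (INR n + 1)). lra.
        field_simplify; try lra.
        assert (f lo + 1 < (INR n + 1) * eps).
        { apply (Rmult_lt_reg_r (/ eps)). apply Rinv_0_lt_compat; lra.
          rewrite Rmult_assoc, Rinv_r by lra. unfold Rdiv in H. lra. }
        lra.
    - exists If. exact HI. }
  apply (ex_RInt_ext (fun x => x * ft x)); [|exact Hg].
  intros x hx. rewrite Rmin_left in hx by lra. rewrite Rmax_right in hx by lra.
  unfold ft, ftil. destruct (Rle_dec lo x); [|lra]. destruct (Rle_dec x hi); lra.
Qed.
Lemma alg (lo p' ps hi a m n G B phi w : R) : 0 < a -> 0 < m -> 0 < n ->
  lo <= p' -> p' <= ps -> ps <= hi -> lo <= G -> G <= p' -> B <= ps * m -> 0 <= phi ->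
  n <= phi * (hi - ps) -> phi * (p' - lo) <= a -> phi * (ps - p') <= m ->
  0 <= w -> w * (m + n) <= n ->
  (a * G + B) / (a + m) <= (1 - w) * hi + w * G.
Proof.
  intros.
  assert (K : (m + n) * B <= (a + m) * m * hi + m * (n - a) * G).
  { destruct (Rle_dec n a).
    - assert (0 <= m * (a - n)) by nra.
      assert (m * (n - a) * G >= m * (n - a) * p') by nra.
      assert ((m + n) * B <= (m + n) * (ps * m)) by (apply Rmult_le_compat_l; lra).
      assert ((a + m) * m * hi >= (a + m) * m * ps) by (apply Rle_ge, Rmult_le_compat_l; nra).
      assert (m * ((a - n) * (ps - p')) >= 0).
      { apply Rle_ge. apply Rmult_le_pos; [lra|]. apply Rmult_le_pos; lra. }
      nra.
    - assert (0 <= m * (n - a)) by nra.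
      assert (m * (n - a) * G >= m * (n - a) * lo) by nra.
      assert ((m + n) * B <= (m + n) * (ps * m)) by (apply Rmult_le_compat_l; lra).
      assert (n * (ps - lo) <= phi * (hi - ps) * (ps - lo)) by (apply Rmult_le_compat_r; lra).
      assert (phi * (ps - lo) * (hi - ps) <= (a + m) * (hi - ps)) by (apply Rmult_le_compat_r; lra).
      assert ((a + m) * (hi - ps) >= (n - a) * (ps - lo)) by nra.
      nra. }
  assert (HR : (a + m) * m * hi + (a + m) * n * G <= (a + m) * (m + n) * ((1 - w) * hi + w * G)).
  { assert (w * (m + n) * (hi - G) <= n * (hi - G)) by nra. nra. }
  apply (Rmult_le_reg_r ((a + m) * (m + n))). nra.
  replace ((a * G + B) / (a + m) * ((a + m) * (m + n))) with ((m + n) * (a * G + B)) by (field; lra).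
  nra.
Qed.

Lemma div_le (x y c a : R) : 0 < c -> 0 < a -> x * a <= y * c -> x / c <= y / a.
Proof.
  intros Hc Ha H. apply (Rmult_le_reg_r (c * a)). nra.
  replace (x / c * (c * a)) with (x * a) by (field; lra).
  replace (y / a * (c * a)) with (y * c) by (field; lra). lra.
Qed.

Theorem proposition2 (lo hi tk te ts : R) (f F : R -> R) :
  spot_price_model lo hi f F ->
  0 < tk -> 0 < te -> 0 < ts -> te < ts ->
  tk < te ->
  tk * (1 / (1 - tk / te) - 1) + te <= ts ->
  P1_optimal lo hi tk te ts f F (Finv lo hi F (1 - tk / te)) 0.
Proof.
  intros [[Hlo0 Hlt] [Hpos [Hdec [Hint [H1 HF]]]]] Htk Hte Hts Htets Htkte Hdl.
  assert (Hxf := ex_xf lo hi f Hlt Hpos Hdec Hint).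
  assert (exf : forall u v, lo <= u -> u <= v -> v <= hi -> ex_RInt f u v)
    by (intros; eapply ex_sub; eauto).
  assert (exg : forall u v, lo <= u -> u <= v -> v <= hi -> ex_RInt (fun x => x * f x) u v)
    by (intros; eapply ex_sub; eauto).
  assert (Chf : forall u v w, lo <= u -> u <= v -> v <= w -> w <= hi ->
             RInt f u w = RInt f u v + RInt f v w).
  { intros u v w h1 h2 h3 h4. symmetry. apply (RInt_Chasles f u v w); apply exf; lra. }
  assert (Chg : forall u v w, lo <= u -> u <= v -> v <= w -> w <= hi ->
             RInt (fun x => x * f x) u w = RInt (fun x => x * f x) u v + RInt (fun x => x * f x) v w).
  { intros u v w h1 h2 h3 h4. symmetry. apply (RInt_Chasles (V:=R_CompleteNormedModule) (fun x => x * f x) u v w); apply exg; lra. }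
  assert (fbnd : forall u v, lo <= u -> u <= v -> v <= hi ->
             f v * (v - u) <= RInt f u v <= f u * (v - u)).
  { intros u v h1 h2 h3. split.
    - replace (f v * (v - u)) with (RInt (fun _ => f v) u v).
      + apply RInt_le; auto. apply ex_RInt_const. intros x hx. apply Hdec; lra.
      + rewrite RInt_const. unfold scal; simpl. unfold mult; simpl. ring.
    - replace (f u * (v - u)) with (RInt (fun _ => f u) u v).
      + apply RInt_le; auto. apply ex_RInt_const. intros x hx. apply Hdec; lra.
      + rewrite RInt_const. unfold scal; simpl. unfold mult; simpl. ring. }
  assert (gbnd : forall u v, lo <= u -> u <= v -> v <= hi ->
             u * RInt f u v <= RInt (fun x => x * f x) u v <= v * RInt f u v).
  { intros u v h1 h2 h3. split.
    - rewrite <- RInt_scal' by auto. apply RInt_le; auto. apply ex_scal; auto.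
      intros x hx. apply Rmult_le_compat_r. apply Hpos; lra. lra.
    - rewrite <- RInt_scal' by auto. apply RInt_le; auto. apply ex_scal; auto.
      intros x hx. apply Rmult_le_compat_r. apply Hpos; lra. lra. }
  assert (Flip : forall x y, lo <= x -> x <= y -> y <= hi ->
             0 <= F y - F x <= f lo * (y - x)).
  { intros x y h1 h2 h3. rewrite (HF x), (HF y) by lra.
    rewrite (Chf lo x y) by lra. destruct (fbnd x y) as [b1 b2]; try lra.
    assert (f y * (y - x) >= 0). { apply Rle_ge, Rmult_le_pos; [apply Hpos|]; lra. }
    assert (f x * (y - x) <= f lo * (y - x)). { apply Rmult_le_compat_r. lra. apply Hdec; lra. }
    lra. }
  assert (Flo : F lo = 0) by (rewrite HF by lra; apply (RInt_point (V:=R_CompleteNormedModule))).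
  assert (Fhi : F hi = 1) by (rewrite HF by lra; exact H1).
  unfold P1_optimal, Finv.
  set (c := 1 - tk / te).
  assert (Hc0 : 0 < c) by (unfold c; apply Rlt_0_minus; apply (Rdiv_lt_1 tk te); lra).
  assert (Hc1 : c < 1) by (unfold c; assert (0 < tk / te) by (apply Rdiv_lt_0_compat; lra); lra).
  assert (Htkc : tk = te * (1 - c)) by (unfold c; field; lra).
  set (S := fun x => lo <= x <= hi /\ c <= F x).
  destruct (Glb_Rbar_correct S) as [Hlb Hglb].
  assert (HShi : S hi) by (split; lra).
  assert (Hlbl : is_lb_Rbar S lo) by (intros x [hx _]; simpl; lra).
  pose proof (Hlb hi HShi) as Hgh. pose proof (Hglb lo Hlbl) as Hgl.
  destruct (Glb_Rbar S) as [ps| |]; simpl in Hgh, Hgl; try contradiction.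
  simpl.
  assert (lbS : forall x, S x -> ps <= x) by (intros x hx; exact (Hlb x hx)).
  assert (glbS : forall y, (forall x, S x -> y <= x) -> y <= ps).
  { intros y hy. exact (Hglb (Finite y) hy). }
  clear Hlb Hglb.
  set (L := f lo + 1).
  assert (HL : 0 < L) by (unfold L; assert (0 <= f lo) by (apply Hpos; lra); lra).
  assert (Fps : F ps = c).
  { destruct (Rtotal_order (F ps) c) as [hlt|[heq|hgt]]; auto.
    - exfalso. set (eps := (c - F ps) / L).
      assert (He : 0 < eps) by (apply Rdiv_lt_0_compat; lra).
      assert (ps + eps <= ps); [|lra].
      apply glbS. intros x hx. destruct (Rle_dec (ps + eps) x); auto.
      exfalso. pose proof (lbS x hx). destruct hx as [[hx1 hx2] hx3].
      destruct (Flip ps x) as [_ b]; try lra.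
      assert (f lo * (x - ps) <= L * (x - ps)) by (apply Rmult_le_compat_r; unfold L; lra).
      assert (L * (x - ps) < L * eps) by (apply Rmult_lt_compat_l; lra).
      assert (L * eps = c - F ps) by (unfold eps; field; lra). lra.
    - exfalso.
      assert (Hpl : lo < ps) by (destruct (Req_dec ps lo) as [e|e]; [rewrite e in hgt; lra|lra]).
      set (x := Rmax lo (ps - (F ps - c) / L)).
      assert (hx1 : lo <= x) by apply Rmax_l.
      assert (hd : 0 < (F ps - c) / L) by (apply Rdiv_lt_0_compat; lra).
      assert (hx2 : x < ps) by (unfold x; apply Rmax_lub_lt; lra).
      assert (S x); [|pose proof (lbS x H); lra].
      split; [lra|].
      destruct (Flip x ps) as [_ b]; try lra.
      assert (ps - x <= (F ps - c) / L).
      { unfold x. pose proof (Rmax_r lo (ps - (F ps - c) / L)). lra. }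
      assert (f lo * (ps - x) <= L * (ps - x)) by (apply Rmult_le_compat_r; unfold L; lra).
      assert (L * (ps - x) <= L * ((F ps - c) / L)) by (apply Rmult_le_compat_l; lra).
      assert (L * ((F ps - c) / L) = F ps - c) by (field; lra). lra. }
  split.
  -
    unfold P1_feasible. rewrite Fps. split; [|split; [|split; [|split]]].
    + intros _. replace (1 - c) with (tk / te) by (unfold c; ring).
      replace (tk / (tk / te)) with te by (field; lra). lra.
    + split; [lra|]. unfold c. lra.
    + lra.
    + lra.
    + lra.
  - intros p' q' [C1 [[Ha C2] [C3 [[Hp1 Hp2] [Hq1 Hq2]]]]].
    unfold Phi1. rewrite Fps.
    set (a := F p') in *.
    set (Hs := (RInt (fun x => x * f x) lo ps : R)).
    set (Hp := (RInt (fun x => x * f x) lo p' : R)).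
    assert (Hpa : lo * a <= Hp <= p' * a).
    { unfold a, Hp. rewrite HF by lra. apply gbnd; lra. }
    assert (Hsc : lo * c <= Hs <= ps * c).
    { rewrite <- Fps. unfold Hs. rewrite HF by lra. apply gbnd; lra. }
    assert (Hgoal : Hs / c <= q' * hi + (1 - q') * (Hp / a)).
    { destruct (Rle_dec ps p') as [hle|hgt].
      + set (m' := (RInt f ps p' : R)). set (B' := (RInt (fun x => x * f x) ps p' : R)).
        assert (Ha' : a = c + m').
        { unfold a, m'. rewrite <- Fps. rewrite !HF by lra. apply Chf; lra. }
        assert (Hp' : Hp = Hs + B') by (unfold Hp, Hs, B'; apply Chg; lra).
        assert (HB : ps * m' <= B') by (apply gbnd; lra).
        assert (Hm : 0 <= m') by (unfold m'; apply RInt_ge_0; auto; intros; apply Hpos; lra).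
        assert (HG : Hs / c <= Hp / a).
        { apply div_le; auto. rewrite Ha', Hp'.
          assert (Hs * m' <= ps * c * m') by (apply Rmult_le_compat_r; lra).
          assert (c * (ps * m') <= c * B') by (apply Rmult_le_compat_l; lra). nra. }
        assert (Hh : Hp / a <= hi).
        { apply (Rmult_le_reg_r a); auto. replace (Hp / a * a) with Hp by (field; lra). nra. }
        assert (q' * (Hp / a) <= q' * hi) by (apply Rmult_le_compat_l; lra).
        lra.
      + assert (Hac : a < c).
        { destruct (Rlt_dec a c) as [h|h]; auto. exfalso.
          apply Rnot_lt_le in h. assert (S p') by (split; [lra|]; exact h). pose proof (lbS p' H). lra. }
        assert (Hw : (1 - q') * (1 - a) <= 1 - c).
        { specialize (C1 ltac:(lra)). rewrite Htkc in C1.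
          assert (Ha1 : 0 < 1 - a) by lra.
          apply (Rmult_le_reg_l te); auto.
          apply (Rmult_le_reg_r (/ (1 - a))). apply Rinv_0_lt_compat; lra.
          replace (te * ((1 - q') * (1 - a)) * / (1 - a)) with ((1 - q') * te) by (field; lra).
          exact C1. }
        set (m := (RInt f p' ps : R)). set (n := (RInt f ps hi : R)). set (B := (RInt (fun x => x * f x) p' ps : R)).
        assert (Hm : c = a + m).
        { unfold a, m. rewrite <- Fps. rewrite !HF by lra. apply Chf; lra. }
        assert (Hn : 1 = c + n).
        { rewrite <- Fps, <- Fhi. unfold n. rewrite !HF by lra. apply Chf; lra. }
        assert (Hs' : Hs = Hp + B) by (unfold Hp, Hs, B; apply Chg; lra).
        assert (HB : B <= ps * m) by (apply gbnd; lra).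
        assert (Hphi : 0 <= f ps) by (apply Hpos; lra).
        assert (Hn1 : n <= f ps * (hi - ps)) by (apply fbnd; lra).
        assert (Hm1 : f ps * (ps - p') <= m) by (apply fbnd; lra).
        assert (Ha1 : f ps * (p' - lo) <= a).
        { assert (f p' * (p' - lo) <= a).
          { unfold a. rewrite HF by lra. apply fbnd; lra. }
          assert (f ps * (p' - lo) <= f p' * (p' - lo)).
          { apply Rmult_le_compat_r. lra. apply Hdec; lra. }
          lra. }
        assert (HG1 : lo <= Hp / a).
        { apply (Rmult_le_reg_r a); auto. replace (Hp / a * a) with Hp by (field; lra). lra. }
        assert (HG2 : Hp / a <= p').
        { apply (Rmult_le_reg_r a); auto. replace (Hp / a * a) with Hp by (field; lra). lra. }
        pose proof (alg lo p' ps hi a m n (Hp / a) B (f ps) (1 - q')) as K.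
        replace (Hs / c) with ((a * (Hp / a) + B) / (a + m)).
        * replace (q' * hi) with ((1 - (1 - q')) * hi) by ring.
          apply K; try lra. replace (m + n) with (1 - a) by lra. replace n with (1 - c) by lra. exact Hw.
        * assert (E1 : a * (Hp / a) = Hp) by (field; lra). rewrite E1.
          replace (a + m) with c by lra. replace (Hp + B) with Hs by lra. reflexivity. }
    replace (0 * te * hi + (1 - 0) * te * Hs / c) with (te * (Hs / c)) by (field; lra).
    replace (q' * te * hi + (1 - q') * te * Hp / a) with (te * (q' * hi + (1 - q') * (Hp / a))) by (field; lra).
    apply Rmult_le_compat_l; lra.
Qed.
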